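(* Let $\pi_0\in(0,1)$, $\sigma\in(0,0.25]$, $w>0$, and let $\psi(\pi)=w$ if $\pi\ge\pi_0$ and $\psi(\pi)=0$ otherwise. For $(p_0,p_1)\in[0,1]^2$ let $$\pi_S=\frac{(1-p_1)\pi_0}{(1-p_1)\pi_0+(1-p_0)(1-\pi_0)},\qquad \pi_C=\frac{p_1\pi_0}{p_1\pi_0+p_0(1-\pi_0)},$$ $$\Phi_\theta(C,\sigma,\pi_0,p_0,p_1)=0.5+2\sigma\theta+(0.5+2\sigma\theta)\psi\!\left(\tfrac{(1+4\sigma)\pi_C}{1+4\sigma\pi_C}\right)+(0.5-2\sigma\theta)\psi\!\left(\tfrac{(1-4\sigma)\pi_C}{1-4\sigma\pi_C}\right)$$ and $\Phi_\theta(S,\sigma,\pi_0,p_0,p_1)=0.5+\psi(\pi_S)$, for $\theta\in\{0,1\}$. Then $$\Phi_\theta(C,\sigma,\pi_0,p_0,p_1)=\begin{cases}0.5+2\sigma\theta & \text{if } p_1(1+4\sigma)<p_0,\\ 0.5+2\sigma\theta+(0.5+2\sigma\theta)w & \text{if } p_1(1-4\sigma)<p_0\le p_1(1+4\sigma),\\ 0.5+2\sigma\theta+w & \text{if } p_0\le p_1(1-4\sigma),\end{cases}$$ and $\Phi_\theta(S,\sigma,\pi_0,p_0,p_1)=0.5+w$ if $p_0\ge p_1$ and $0.5$ otherwise.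
   Context: Interpretation: an expert of known type $\theta$ (competent iff $\theta=1$, prior $\pi_0$) chooses the complex rule with probability $p_\theta$; $\pi_C,\pi_S$ are the advisee's beliefs after observing the complex or simple rule; the expert earns wage $w$ iff the advisee's posterior that he is competent is at least $\pi_0$; $\Phi_\theta(r,\cdot)$ is the type-$\theta$ expert's expected payoff from choosing rule $r$ with certainty. *)

(* Defs.v *)
From mathcomp Require Import all_boot all_order all_algebra.
Set Implicit Arguments. Unset Strict Implicit. Unset Printing Implicit Defensive.
Import Order.TTheory GRing.Theory Num.Theory.
Local Open Scope ring_scope.

Definition psi {R : realFieldType} (pi0 w pi : R) : R :=
  if pi0 <= pi then w else 0.

Definition piS {R : realFieldType} (pi0 p0 p1 : R) : R :=
  (1 - p1) * pi0 / ((1 - p1) * pi0 + (1 - p0) * (1 - pi0)).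

Definition piC {R : realFieldType} (pi0 p0 p1 : R) : R :=
  p1 * pi0 / (p1 * pi0 + p0 * (1 - pi0)).

Definition PhiC {R : realFieldType} (th sigma pi0 w p0 p1 : R) : R :=
  let pc := piC pi0 p0 p1 in
  (1/2 + 2 * sigma * th)
  + (1/2 + 2 * sigma * th) * psi pi0 w ((1 + 4 * sigma) * pc / (1 + 4 * sigma * pc))
  + (1/2 - 2 * sigma * th) * psi pi0 w ((1 - 4 * sigma) * pc / (1 - 4 * sigma * pc)).

Definition PhiS {R : realFieldType} (pi0 w p0 p1 : R) : R :=
  1/2 + psi pi0 w (piS pi0 p0 p1).

(* Main.v *)
Require Import Defs.
From mathcomp Require Import all_boot all_order all_algebra.
From mathcomp Require Import ring lra.
Import Order.TTheory GRing.Theory Num.Theory.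
Local Open Scope ring_scope.

Lemma key (R : realFieldType) (pi0 x d c : R) :
  0 < pi0 < 1 -> 0 < d -> x - pi0 * d = pi0 * (1 - pi0) * c ->
  (pi0 <= x / d) = (0 <= c).
Proof.
move=> /andP[h0 h1] hd he.
rewrite ler_pdivlMr // -subr_ge0 he pmulr_rge0 //.
by apply: mulr_gt0; lra.
Qed.

Theorem lemma5 (R : realFieldType) (pi0 sigma w th p0 p1 : R) :
  0 < pi0 < 1 -> 0 < sigma <= 1/4 -> 0 < w ->
  (th = 0 \/ th = 1) ->
  0 <= p0 <= 1 -> 0 <= p1 <= 1 ->
  ((* the belief pi_C and the updated beliefs below are well defined *)
   p1 * pi0 + p0 * (1 - pi0) != 0 ->
   1 - 4 * sigma * piC pi0 p0 p1 != 0 ->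
     (p1 * (1 + 4 * sigma) < p0 ->
        PhiC th sigma pi0 w p0 p1 = 1/2 + 2 * sigma * th)
  /\ (p1 * (1 - 4 * sigma) < p0 <= p1 * (1 + 4 * sigma) ->
        PhiC th sigma pi0 w p0 p1
          = 1/2 + 2 * sigma * th + (1/2 + 2 * sigma * th) * w)
  /\ (p0 <= p1 * (1 - 4 * sigma) ->
        PhiC th sigma pi0 w p0 p1 = 1/2 + 2 * sigma * th + w))
  /\
  ((* the belief pi_S is well defined *)
   (1 - p1) * pi0 + (1 - p0) * (1 - pi0) != 0 ->
     PhiS pi0 w p0 p1 = if p1 <= p0 then 1/2 + w else 1/2).
Proof.
move=> hpi hs hw hth hp0 hp1.
have hpi' := hpi; move/andP: hpi' => [h0 h1].
move/andP: hs => [s0 s1]; move/andP: hp0 => [a0 a1]; move/andP: hp1 => [b0 b1].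
have q0 : 0 <= 1 - pi0 by lra.
have pp : 0 <= p1 * pi0 by rewrite mulr_ge0 // ltW.
have pq : 0 <= p0 * (1 - pi0) by rewrite mulr_ge0.
split.
  move=> hD hL.
  set D := p1 * pi0 + p0 * (1 - pi0).
  have Dp : 0 < D by rewrite lt0r hD /D addr_ge0.
  have DD : D != 0 by [].
  set a := 4 * sigma.
  have a0' : 0 < a by rewrite /a; lra.
  have a1' : a <= 1 by rewrite /a; lra.
  have t0 : 0 <= a * (p1 * pi0) by rewrite mulr_ge0 // ltW.
  have apD : 0 < D + a * (p1 * pi0) by lra.
  have eH : (1 + a) * piC pi0 p0 p1 / (1 + a * piC pi0 p0 p1)
        = ((1 + a) * (p1 * pi0)) / (D + a * (p1 * pi0)).
    rewrite /piC -/D; field; apply/andP; split => //.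
    by rewrite gt_eqF.
  have e1 : 1 - a * piC pi0 p0 p1 = (D - a * (p1 * pi0)) / D.
    by rewrite /piC -/D; field.
  have amD : 0 < D - a * (p1 * pi0).
    rewrite lt_neqAle; apply/andP; split.
      apply: contraNneq hL => e.
      by rewrite -/a e1 -e mul0r.
    rewrite /D; nra.
  have eL : (1 - a) * piC pi0 p0 p1 / (1 - a * piC pi0 p0 p1)
        = ((1 - a) * (p1 * pi0)) / (D - a * (p1 * pi0)).
    rewrite e1 /piC -/D; field; apply/andP; split => //.
    by rewrite gt_eqF.
  have HH : (pi0 <= (1 + a) * piC pi0 p0 p1 / (1 + a * piC pi0 p0 p1))
          = (0 <= p1 * (1 + a) - p0).
    by rewrite eH; apply: key => //; rewrite /D; ring.
  have LL : (pi0 <= (1 - a) * piC pi0 p0 p1 / (1 - a * piC pi0 p0 p1))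
          = (0 <= p1 * (1 - a) - p0).
    by rewrite eL; apply: key => //; rewrite /D; ring.
  rewrite /PhiC /psi -/a HH LL !subr_ge0.
  split; [|split].
  - move=> h; rewrite leNgt h ifF; first by rewrite !mulr0 !addr0.
    apply/negbTE; rewrite -ltNge; apply: le_lt_trans h; nra.
  - move=> /andP[h h']; rewrite h' leNgt h /= mulr0 addr0 //.
  - move=> h; rewrite h ifT; last by apply: le_trans h _; nra.
    by field.
move=> hS.
rewrite /PhiS /psi /piS.
set E := (1 - p1) * pi0 + (1 - p0) * (1 - pi0).
have Ep : 0 < E.
  by rewrite lt0r hS /E addr_ge0 // mulr_ge0 // ?subr_ge0 // ltW.
rewrite (@key _ pi0 _ E (p0 - p1)) //; last by rewrite /E; ring.
by rewrite subr_ge0; case: ifP; rewrite ?addr0.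
Qed.
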